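(* Let $f_\infty:(0,\infty)\to\mathbb{R}$ be defined by $f_\infty(x)=(x^2-1)^2+\frac{(x^2+1)^2}{x}(x^2-1)\left(\arctan(x)-\frac{\pi}{2}\right)$. Then $f_\infty(x)=0$ only for $x=1$, $f_\infty(x)>0$ for $x\in(0,1)$, and $f_\infty(x)<0$ for all $x>1$. *)

(* Defs.v *)
From Stdlib Require Import Reals.
Open Scope R_scope.

Definition f_inf (x : R) : R :=
  (x ^ 2 - 1) ^ 2 + (x ^ 2 + 1) ^ 2 / x * (x ^ 2 - 1) * (atan x - PI / 2).

(* Main.v *)
Require Import Defs.
From Stdlib Require Import Reals Lra Psatz.
Open Scope R_scope.

Lemma atan_lb (t : R) : 0 < t -> t / (1 + t ^ 2) < atan t.
Proof.
  intros Ht.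
  set (y := atan t).
  assert (Hy0 : 0 < y).
  { unfold y. assert (H0 : atan 0 = 0).
    { rewrite <- tan_0 at 1. apply atan_tan. pose proof PI_RGT_0. lra. }
    rewrite <- H0. now apply atan_increasing. }
  pose proof (atan_bound t) as [Hb1 Hb2]. fold y in Hb1, Hb2.
  assert (Hc : 0 < cos y) by (apply cos_gt_0; lra).
  assert (Hs : sin y = t * cos y).
  { pose proof (tan_atan t) as Ht'. fold y in Ht'. unfold tan in Ht'.
    rewrite <- Ht'. field. lra. }
  pose proof (sin2_cos2 y) as H2. unfold Rsqr in H2.
  rewrite Hs in H2.
  assert (Hcc : cos y * cos y = / (1 + t ^ 2)).
  { apply (Rmult_eq_reg_l (1 + t^2)); [|nra]. rewrite Rinv_r; [|nra]. nra. }
  pose proof (sin_lt_x (2 * y) ltac:(lra)) as Hsl.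
  rewrite sin_2a, Hs in Hsl.
  assert (E : t / (1 + t ^ 2) = t * (cos y * cos y)) by (rewrite Hcc; reflexivity).
  rewrite E. lra.
Qed.

Lemma f_inf_form (x : R) : 0 < x ->
  f_inf x = (x ^ 2 - 1) * ((x ^ 2 - 1) - (x ^ 2 + 1) ^ 2 / x * atan (/ x)).
Proof.
  intros Hx. unfold f_inf. rewrite atan_inv by exact Hx. field. lra.
Qed.

Lemma g_neg (x : R) : 0 < x ->
  (x ^ 2 - 1) - (x ^ 2 + 1) ^ 2 / x * atan (/ x) < 0.
Proof.
  intros Hx.
  pose proof (atan_lb (/ x) (Rinv_0_lt_compat _ Hx)) as H.
  assert (E : / x / (1 + (/ x) ^ 2) = x / (x ^ 2 + 1)) by (field; nra).
  rewrite E in H.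
  assert (P : 0 < (x ^ 2 + 1) ^ 2 / x).
  { apply Rdiv_lt_0_compat; nra. }
  assert (Q : (x ^ 2 + 1) ^ 2 / x * (x / (x ^ 2 + 1)) = x ^ 2 + 1) by (field; nra).
  assert (R1 : (x ^ 2 + 1) ^ 2 / x * (x / (x ^ 2 + 1)) <
               (x ^ 2 + 1) ^ 2 / x * atan (/ x)) by (apply Rmult_lt_compat_l; auto).
  lra.
Qed.

Theorem lemma3p3 :
  (forall x : R, 0 < x -> (f_inf x = 0 <-> x = 1)) /\
  (forall x : R, 0 < x < 1 -> f_inf x > 0) /\
  (forall x : R, 1 < x -> f_inf x < 0).
Proof.
  split; [|split].
  - intros x Hx. rewrite f_inf_form by exact Hx. pose proof (g_neg x Hx).
    split.
    + intros H0. apply Rmult_integral in H0. destruct H0 as [H0|H0]; [|lra].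
      nra.
    + intros ->. ring.
  - intros x [Hx Hx1]. rewrite f_inf_form by exact Hx. pose proof (g_neg x Hx).
    assert (x ^ 2 - 1 < 0) by nra. nra.
  - intros x Hx1. assert (Hx : 0 < x) by lra.
    rewrite f_inf_form by exact Hx. pose proof (g_neg x Hx).
    assert (0 < x ^ 2 - 1) by nra. nra.
Qed.
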